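(* Let $C$ be a small category and let $\xi_*:X\to Y$ be a morphism of $\Delta/C$ such that $\xi:[q_X]\to[q_Y]$ is surjective. Then its class $[\xi_*]:X\to Y$ is an isomorphism in $[\Delta/C]$.
   Context: For $q\ge0$, $[q]=\{0<\dots<q\}$ viewed as a category. A $q$-simplex of the nerve $NC$ is a functor $X:[q]\to C$; write $q_X=q$. The category $\Delta/C$ has as objects all simplices of $NC$ (all dimensions) and as morphisms $X\to Y$ the order-preserving maps $\xi:[q_X]\to[q_Y]$ with $Y\circ\xi=X$, written $\xi_*$. Given a $q$-simplex $X$ and a surjective order-preserving $s:[q+1]\to[q]$, let $d,d':[q]\to[q+1]$ be the two order-preserving right inverses of $s$; the morphisms $d_*,d'_*:X\to X\circ s$ are called elementary equivalent. $\sim$ is the smallest equivalence relation on morphisms of $\Delta/C$ (between the same source and target) that is compatible with composition and contains all elementary equivalent pairs; $[\Delta/C]$ is the quotient category with the same objects and morphisms the $\sim$-classes $[\xi_*]$. *)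

(* Defs.v *)
From mathcomp Require Import all_boot.
Set Implicit Arguments. Unset Strict Implicit. Unset Printing Implicit Defensive.

Record category := Category {
  Ob : Type;
  Hom : Ob -> Ob -> Type;
  cid : forall a, Hom a a;
  ccomp : forall a b c, Hom b c -> Hom a b -> Hom a c;
  ccomp_id_l : forall a b (f : Hom a b), ccomp (cid b) f = f;
  ccomp_id_r : forall a b (f : Hom a b), ccomp f (cid a) = f;
  ccomp_assoc : forall a b c d (f : Hom a b) (g : Hom b c) (h : Hom c d),
      ccomp h (ccomp g f) = ccomp (ccomp h g) f
}.
Arguments cid {C} a : rename.
Arguments ccomp {C a b c} : rename.

(* [q] = {0 < ... < q} as a poset category, with objects 'I_q.+1.
   A functor [q] -> C (= a q-simplex of NC). *)
Record functor (C : category) (q : nat) := Functor {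
  fob : 'I_q.+1 -> Ob C;
  far : forall i j : 'I_q.+1, (i <= j)%N -> Hom (fob i) (fob j);
  far_id : forall (i : 'I_q.+1) (h : (i <= i)%N), far h = cid (fob i);
  far_comp : forall (i j k : 'I_q.+1) (hij : (i <= j)%N) (hjk : (j <= k)%N) (hik : (i <= k)%N),
      far hik = ccomp (far hjk) (far hij)
}.

Record ordmap (p q : nat) := Ordmap {
  omap :> 'I_p.+1 -> 'I_q.+1;
  omono : forall i j : 'I_p.+1, (i <= j)%N -> (omap i <= omap j)%N
}.

Definition ordmap_id (p : nat) : ordmap p p :=
  @Ordmap p p (fun i => i) (fun i j h => h).

Definition ordmap_comp p q r (g : ordmap q r) (f : ordmap p q) : ordmap p r :=
  @Ordmap p r (fun i => g (f i)) (fun i j h => omono g (omono f h)).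

Definition fcomp (C : category) p q (Y : functor C q) (xi : ordmap p q) : functor C p :=
  @Functor C p (fun i => fob Y (xi i))
    (fun i j h => far Y (omono xi h))
    (fun i h => far_id Y (omono xi h))
    (fun i j k hij hjk hik => far_comp Y (omono xi hij) (omono xi hjk) (omono xi hik)).

Lemma fcomp_id (C : category) q (X : functor C q) : fcomp X (ordmap_id q) = X.
Proof. by case: X. Qed.

Lemma fcomp_comp (C : category) p q r (Z : functor C r) (g : ordmap q r) (f : ordmap p q) :
  fcomp (fcomp Z g) f = fcomp Z (ordmap_comp g f).
Proof. by []. Qed.

(* Objects of Delta/C: simplices of NC of all dimensions. *)
Record simplex (C : category) := Simplex { sdim : nat; sfun : functor C sdim }.

(* Morphisms X -> Y of Delta/C: order-preserving xi with Y o xi = X. *)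
Record dmor (C : category) (X Y : simplex C) := DMor {
  dmap : ordmap (sdim X) (sdim Y);
  dmapP : fcomp (sfun Y) dmap = sfun X
}.

Definition dmor_id (C : category) (X : simplex C) : dmor X X :=
  @DMor C X X (ordmap_id (sdim X)) (fcomp_id (sfun X)).

Definition dmor_comp (C : category) (X Y Z : simplex C) (g : dmor Y Z) (f : dmor X Y) :
  dmor X Z.
Proof.
refine (@DMor C X Z (ordmap_comp (dmap g) (dmap f)) _).
by rewrite -fcomp_comp (dmapP g) (dmapP f).
Defined.

Definition simplex_comp (C : category) (X : simplex C) (s : ordmap (sdim X).+1 (sdim X)) :
  simplex C := @Simplex C (sdim X).+1 (fcomp (sfun X) s).

Inductive elementary (C : category) :
  forall X Y : simplex C, dmor X Y -> dmor X Y -> Prop :=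
| Elementary (X : simplex C) (s : ordmap (sdim X).+1 (sdim X))
    (s_surj : forall j, exists i, s i = j)
    (d d' : ordmap (sdim X) (sdim X).+1)
    (hd : forall i, s (d i) = i) (hd' : forall i, s (d' i) = i)
    (e : fcomp (sfun (simplex_comp s)) d = sfun X)
    (e' : fcomp (sfun (simplex_comp s)) d' = sfun X) :
    @elementary C X (simplex_comp s) (DMor e) (DMor e').

Inductive dsim (C : category) : forall X Y : simplex C, dmor X Y -> dmor X Y -> Prop :=
| dsim_elem X Y (f g : dmor X Y) : elementary f g -> dsim f g
| dsim_refl X Y (f : dmor X Y) : dsim f f
| dsim_sym X Y (f g : dmor X Y) : dsim f g -> dsim g f
| dsim_trans X Y (f g h : dmor X Y) : dsim f g -> dsim g h -> dsim f h
| dsim_comp X Y Z (f f' : dmor X Y) (g g' : dmor Y Z) :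
    dsim f f' -> dsim g g' -> dsim (dmor_comp g f) (dmor_comp g' f').

(* [f] is an isomorphism in the quotient category [Delta/C]: there is a morphism
   g : Y -> X whose class is a two-sided inverse of the class of f
   (composition and identities in [Delta/C] are induced from Delta/C). *)
Definition quot_iso (C : category) (X Y : simplex C) (f : dmor X Y) : Prop :=
  exists g : dmor Y X,
    dsim (dmor_comp g f) (dmor_id X) /\ dsim (dmor_comp f g) (dmor_id Y).

(* Main.v *)
Require Import Defs.
From mathcomp Require Import all_boot.
From mathcomp Require Import zify.
From Stdlib Require Import FunctionalExtensionality ProofIrrelevance.
Set Implicit Arguments. Unset Strict Implicit. Unset Printing Implicit Defensive.

Lemma ordmap_ext p q (f g : ordmap p q) : (forall i, val (f i) = val (g i)) -> f = g.
Proof.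
case: f => f fm; case: g => g gm /= H.
have E : f = g by apply: functional_extensionality => i; apply: val_inj; exact: H.
subst g. by rewrite (proof_irrelevance _ fm gm).
Qed.

Lemma dmor_ext C (X Y : simplex C) (f g : dmor X Y) : dmap f = dmap g -> f = g.
Proof. case: f => f fP; case: g => g gP /= E; subst g. by rewrite (proof_irrelevance _ fP gP). Qed.

Definition mko p q (f : nat -> nat) (Hb : forall i, i <= p -> f i <= q)
  (Hm : forall i j, i <= j -> f i <= f j) : ordmap p q.
refine (@Ordmap p q (fun i => inord (f i)) _).
move=> i j hij.
have hi : f i <= q by apply: Hb; rewrite -ltnS.
have hj : f j <= q by apply: Hb; rewrite -ltnS.
by rewrite !inordK ?ltnS //; apply: Hm.
Defined.

Arguments mko : simpl never.
Lemma mkoE p q f Hb Hm (i : 'I_p.+1) : val (@mko p q f Hb Hm i) = f i.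
Proof. rewrite /= inordK // ltnS; apply: Hb; by rewrite -ltnS. Qed.

Definition hf k i := if i == k.+1 then k else i.
Definition tf k i := if i <= k.+1 then i else i.-1.
Definition gf k i := if i <= k then i else i.-1.
Definition af k i := if i <= k.+1 then i else i.+1.
Definition bf k i := if i <= k then i else i.+1.

Ltac cases := repeat (case: ifP => /=); move=> *; lia.

Lemma hf_m k i j : i <= j -> hf k i <= hf k j. Proof. rewrite /hf; cases. Qed.
Lemma tf_m k i j : i <= j -> tf k i <= tf k j. Proof. rewrite /tf; cases. Qed.
Lemma gf_m k i j : i <= j -> gf k i <= gf k j. Proof. rewrite /gf; cases. Qed.
Lemma af_m k i j : i <= j -> af k i <= af k j. Proof. rewrite /af; cases. Qed.
Lemma bf_m k i j : i <= j -> bf k i <= bf k j. Proof. rewrite /bf; cases. Qed.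
Lemma hf_b p k : k < p -> forall i, i <= p -> hf k i <= p. Proof. move=> ? i ?; rewrite /hf; cases. Qed.
Lemma tf_b p k : k < p -> forall i, i <= p.+1 -> tf k i <= p. Proof. move=> ? i ?; rewrite /tf; cases. Qed.
Lemma gf_b p k : k < p -> forall i, i <= p.+1 -> gf k i <= p. Proof. move=> ? i ?; rewrite /gf; cases. Qed.
Lemma af_b p k : forall i, i <= p -> af k i <= p.+1. Proof. move=> i ?; rewrite /af; cases. Qed.
Lemma bf_b p k : forall i, i <= p -> bf k i <= p.+1. Proof. move=> i ?; rewrite /bf; cases. Qed.
Lemma ta k i : tf k (af k i) = i. Proof. rewrite /tf /af; cases. Qed.
Lemma tb k i : tf k (bf k i) = i. Proof. rewrite /tf /bf; cases. Qed.
Lemma ga k i : gf k (af k i) = hf k i. Proof. rewrite /gf /af /hf; cases. Qed.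
Lemma gb k i : gf k (bf k i) = i. Proof. rewrite /gf /bf; cases. Qed.
Lemma hg k i : hf k (gf k i) = hf k (tf k i). Proof. rewrite /gf /tf /hf; cases. Qed.

Lemma lemA C (X : simplex C) k (hk : k < sdim X) (H : dmor X X) :
  (forall i : 'I_(sdim X).+1, val (dmap H i) = hf k i) -> dsim H (dmor_id X).
Proof.
move=> hH.
have [T hT] : {T : ordmap (sdim X).+1 (sdim X) | forall i, val (T i) = tf k i}.
  by exists (mko (tf_b hk) (@tf_m k)) => i; exact: mkoE.
have [A hA'] : {T : ordmap (sdim X) (sdim X).+1 | forall i, val (T i) = af k i}.
  by exists (mko (@af_b _ k) (@af_m k)) => i; exact: mkoE.
have [B hB'] : {T : ordmap (sdim X) (sdim X).+1 | forall i, val (T i) = bf k i}.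
  by exists (mko (@bf_b _ k) (@bf_m k)) => i; exact: mkoE.
have [G hG] : {T : ordmap (sdim X).+1 (sdim X) | forall i, val (T i) = gf k i}.
  by exists (mko (gf_b hk) (@gf_m k)) => i; exact: mkoE.
have eA : fcomp (sfun (simplex_comp T)) A = sfun X.
  rewrite /= fcomp_comp.
  have -> : ordmap_comp T A = ordmap_id _ by apply: ordmap_ext => i; rewrite /= hT hA' ta.
  exact: fcomp_id.
have eB : fcomp (sfun (simplex_comp T)) B = sfun X.
  rewrite /= fcomp_comp.
  have -> : ordmap_comp T B = ordmap_id _ by apply: ordmap_ext => i; rewrite /= hT hB' tb.
  exact: fcomp_id.
have eG : fcomp (sfun X) G = sfun (simplex_comp T).
  rewrite /=; have hh := dmapP H; rewrite -{1 2}hh !fcomp_comp; congr fcomp.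
  by apply: ordmap_ext => i; rewrite /= !hH hG hT hg.
have hA : forall i, T (A i) = i by move=> i; apply: val_inj; rewrite hT hA' ta.
have hB : forall i, T (B i) = i by move=> i; apply: val_inj; rewrite hT hB' tb.
have sT : forall j, exists i, T i = j by move=> j; exists (A j).
have el := Elementary sT hA hB eA eB.
pose Gm := @DMor C (simplex_comp T) X G eG.
have := dsim_comp (dsim_elem el) (dsim_refl Gm).
have -> : dmor_comp Gm (DMor eA) = H.
  by apply: dmor_ext; apply: ordmap_ext => i; rewrite /= hH hG hA' ga.
have -> : dmor_comp Gm (DMor eB) = dmor_id X.
  by apply: dmor_ext; apply: ordmap_ext => i; rewrite /= hG hB' gb.
done.
Qed.

Lemma section_ex p q (xi : ordmap p q) :
  (forall j : 'I_q.+1, exists i : 'I_p.+1, xi i = j) ->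
  exists2 s : ordmap q p, (forall j, xi (s j) = j) & (forall i, val (s (xi i)) <= i).
Proof.
move=> surj.
have ex : forall j : 'I_q.+1, exists n, (n < p.+1) && (xi (inord n) == j).
  move=> j; have [i hi] := surj j; exists (val i); by rewrite ltn_ord inord_val hi eqxx.
have sP : forall j, (ex_minn (ex j) < p.+1) && (xi (inord (ex_minn (ex j))) == j)
         /\ forall n, (n < p.+1) && (xi (inord n) == j) -> ex_minn (ex j) <= n.
  by move=> j; case: ex_minnP => m hm hmin; split.
have mono : forall j j' : 'I_q.+1, j <= j' ->
   (inord (ex_minn (ex j)) : 'I_p.+1) <= (inord (ex_minn (ex j')) : 'I_p.+1).
  move=> j j' hjj'.
  have [/andP [hm /eqP hxm] hmin] := sP j.
  have [/andP [hm' /eqP hxm'] hmin'] := sP j'.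
  rewrite !inordK //.
  case: (leqP (ex_minn (ex j)) (ex_minn (ex j'))) => // hlt.
  have h1 : (xi (inord (ex_minn (ex j'))) <= xi (inord (ex_minn (ex j))))%N.
    by apply: omono; rewrite !inordK // ltnW.
  rewrite hxm hxm' in h1.
  have ejj : j = j' by apply: val_inj; apply/eqP; rewrite eqn_leq hjj' h1.
  subst j'.
  have := hmin (ex_minn (ex j)); rewrite hm' hxm' eqxx /= => /(_ isT).
  by rewrite leqNgt hlt.
exists (Ordmap mono) => [j|i] /=.
  by have [/andP [_ /eqP ->] _] := sP j.
have [/andP [hm _] hmin] := sP (xi i).
rewrite inordK //; apply: hmin; by rewrite ltn_ord inord_val eqxx.
Qed.

Lemma fixX C (X Y : simplex C) (xi : dmor X Y) (f : ordmap (sdim X) (sdim X)) :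
  (forall i, dmap xi (f i) = dmap xi i) -> fcomp (sfun X) f = sfun X.
Proof.
move=> hf; have hh := dmapP xi; rewrite -{1 2}hh fcomp_comp; congr fcomp.
by apply: ordmap_ext => i /=; rewrite hf.
Qed.

Lemma lemB C (X Y : simplex C) (xi : dmor X Y) n : forall (F : dmor X X),
  \sum_(i < (sdim X).+1) (val i - val (dmap F i)) < n ->
  (forall i, val (dmap F i) <= i) -> (forall i, dmap xi (dmap F i) = dmap xi i) ->
  dsim F (dmor_id X).
Proof.
elim: n => [|n IH] F; first by rewrite ltn0.
move=> hm hle hxi.
case: (boolP [exists i, val (dmap F i) < i]) => [/existsP [i0 hi0] | /existsP hno]; last first.
  have -> : F = dmor_id X; last exact: dsim_refl.
  apply: dmor_ext; apply: ordmap_ext => i /=.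
  apply/eqP; rewrite eqn_leq hle /= leqNgt; apply/negP => h; apply: hno; by exists i.
case: (@arg_maxnP _ i0 (fun i => val (dmap F i) < i) (fun i => val i) hi0) => j hj jmax.
set c := val (dmap F j) in hj.
have hbig : forall i : 'I_(sdim X).+1, j < i -> val (dmap F i) = i.
  move=> i hji; apply/eqP; rewrite eqn_leq hle /= leqNgt; apply/negP => h.
  have := jmax i h; rewrite /= leqNgt hji //.
have hjp : j <= sdim X by rewrite -ltnS.
have cb : c.+1 < (sdim X).+1 by rewrite ltnS; apply: leq_trans hj hjp.
pose v (i : 'I_(sdim X).+1) := if i == j then c.+1 else val (dmap F i).
have vmono : forall i i' : 'I_(sdim X).+1, i <= i' -> v i <= v i'.
  move=> i i' hii'; rewrite /v.
  case: (eqVneq i j) => [eij|hij]; case: (eqVneq i' j) => [ei'j|hi'j] //.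
  - rewrite eij in hii'.
    have hlt : j < i' by rewrite ltn_neqAle hii' andbT eq_sym; exact: hi'j.
    by rewrite hbig //; exact: ltn_trans hj hlt.
  - rewrite ei'j in hii' *; have := omono (dmap F) hii'; move=> h; apply: leq_trans h _; exact: leqnSn.
  - exact: omono.
have [F' hF'] : {F' : ordmap (sdim X) (sdim X) | forall i, val (F' i) = v i}.
  have hb : forall i, v i < (sdim X).+1.
    by move=> i; rewrite /v; case: ifP => // _; exact: ltn_ord.
  have mo : forall i i' : 'I_(sdim X).+1, i <= i' -> (inord (v i) : 'I_(sdim X).+1) <= (inord (v i') : 'I_(sdim X).+1).
    by move=> i i' h; rewrite !inordK //; apply: vmono.
  by exists (Ordmap mo) => i /=; rewrite inordK.
have xc : dmap xi (inord c.+1) = dmap xi j.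
  have e1 : dmap xi (dmap F j) = dmap xi j := hxi j.
  apply: val_inj; apply/eqP; rewrite eqn_leq; apply/andP; split.
    by apply: omono; rewrite inordK.
  rewrite -{1}e1; apply: omono; by rewrite inordK // -/c.
have hxi' : forall i, dmap xi (F' i) = dmap xi i.
  move=> i; case: (eqVneq i j) => [->|hij].
    rewrite -xc; congr (dmap xi _); apply: val_inj; by rewrite hF' /v eqxx; apply/esym/inordK.
  rewrite -(hxi i); congr (dmap xi _); apply: val_inj; by rewrite hF' /v (negbTE hij).
pose F'm := DMor (fixX hxi').
have hcp : c < sdim X by rewrite -ltnS.
have [Hh hHh] : {H : ordmap (sdim X) (sdim X) | forall i, val (H i) = hf c i}.
  by exists (mko (hf_b hcp) (@hf_m c)) => i; exact: mkoE.
have hxiH : forall i, dmap xi (Hh i) = dmap xi i.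
  move=> i; rewrite /hf in hHh; case: (eqVneq (val i) c.+1) => hic.
  - have -> : Hh i = dmap F j by apply: val_inj; rewrite hHh hic eqxx.
    have -> : i = inord c.+1 by apply: val_inj; rewrite hic; apply/esym/inordK.
    by rewrite hxi xc.
  - by congr (dmap xi _); apply: val_inj; rewrite hHh (negbTE hic).
pose Hm := DMor (fixX hxiH).
have hFeq : F = dmor_comp Hm F'm.
  apply: dmor_ext; apply: ordmap_ext => i /=; rewrite hHh hF' /v /hf.
  case: (eqVneq i j) => [->|hij]; first by rewrite eqxx.
  case: eqP => // hFi; exfalso.
  case: (ltngtP i j) => hij'.
  - have := omono (dmap F) (ltnW hij'); rewrite hFi -/c; by rewrite ltnn.
  - have := hbig i hij'; move: hFi hj hij'; lia.
  - by move: hij => /eqP; apply; apply: val_inj.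
have hmF' : \sum_(i < (sdim X).+1) (val i - val (dmap F'm i)) < n.
  rewrite (bigD1 j) //= in hm; rewrite (bigD1 j) //=.
  rewrite (eq_bigr (fun i : 'I_(sdim X).+1 => nat_of_ord i - nat_of_ord (dmap F i))); last first.
    by move=> i hij; rewrite hF' /v (negbTE hij).
  rewrite hF' /v eqxx -/c; have ec : nat_of_ord (dmap F j) = c by [].
  move: hm hj ec; lia.
have hleF' : forall i, val (dmap F'm i) <= i.
  move=> i /=; rewrite hF' /v; case: eqP => [->|_] //; exact: hle.
have := dsim_comp (IH F'm hmF' hleF' hxi') (lemA hcp (H:=Hm) hHh).
have -> : dmor_comp (dmor_id X) (dmor_id X) = dmor_id X by apply: dmor_ext; apply: ordmap_ext.
by rewrite -hFeq.
Qed.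

Theorem lemma17 (C : category) (X Y : simplex C) (xi : dmor X Y) :
  (forall j : 'I_(sdim Y).+1, exists i : 'I_(sdim X).+1, dmap xi i = j) ->
  quot_iso xi.
Proof.
move=> surj.
have [s hs1 hs2] := section_ex surj.
have eS : fcomp (sfun X) s = sfun Y.
  have hh := dmapP xi; rewrite -hh fcomp_comp.
  have -> : ordmap_comp (dmap xi) s = ordmap_id _.
    by apply: ordmap_ext => j /=; rewrite hs1.
  exact: fcomp_id.
exists (@DMor C Y X s eS); split.
  apply: (@lemB C X Y xi (\sum_(i < (sdim X).+1) (val i - val (dmap (dmor_comp (@DMor C Y X s eS) xi) i))).+1) => //.
  by move=> i /=; rewrite hs1.
have -> : dmor_comp xi (@DMor C Y X s eS) = dmor_id Y.
  by apply: dmor_ext; apply: ordmap_ext => j /=; rewrite hs1.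
exact: dsim_refl.
Qed.
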